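(* Let $c = 2^{2k+1}m$ with $k \geq 1$ an integer and $m$ an odd integer. Fix an algebraic closure $\overline{\mathbb{Q}}_2$ of $\mathbb{Q}_2$, an element $\delta$ with $\delta^2 = -c$, and $\alpha, \beta \in \overline{\mathbb{Q}}_2$ with $\alpha^2 = -c+\delta$, $\beta^2 = -c - \delta$. Let $L_c = \mathbb{Q}_2(\alpha,\beta)$ and $G = \mathrm{Gal}(L_c/\mathbb{Q}_2)$, whose elements are $\sigma_0 = \mathrm{id}$ and $\sigma_1,\dots,\sigma_7$ determined by $(\sigma(\alpha),\sigma(\beta))$: $\sigma_1: (-\alpha,\beta)$, $\sigma_2: (\alpha,-\beta)$, $\sigma_3: (-\alpha,-\beta)$, $\sigma_4: (\beta,\alpha)$, $\sigma_5: (-\beta,\alpha)$, $\sigma_6: (\beta,-\alpha)$, $\sigma_7: (-\beta,-\alpha)$. Then the lower ramification groups of $L_c/\mathbb{Q}_2$ are: $G_0 = G_1 = G$; $G_2 = G_3 = \{\sigma_0,\sigma_3,\sigma_5,\sigma_6\}$; $G_4 = G_5 = G_6 = G_7 = \{\sigma_0,\sigma_3\}$; $G_n = \{\sigma_0\}$ for $n \geq 8$.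
   Context: For such $c$, $L_c/\mathbb{Q}_2$ is a totally ramified Galois extension of degree $8$ (with group $D_4$). Let $\pi$ be a uniformizer of $L_c$ and $v_\pi$ the valuation with $v_\pi(\pi) = 1$ (so $v_\pi(2)=8$). For $i \geq 0$, $G_i = \{g \in G : v_\pi(g(\pi) - \pi) \geq i+1\}$. *)

(* Defs.v *)
From HB Require Import structures.
From mathcomp Require Import all_boot all_order all_algebra all_fingroup all_field.
Set Implicit Arguments. Unset Strict Implicit. Unset Printing Implicit Defensive.
Import Order.TTheory GRing.Theory Num.Theory.
Local Open Scope ring_scope.

(* A (rank-one, Z-valued) valuation on a field, given on nonzero elements;
   the value at 0 (= +oo) is never used. *)
Definition is_valuation (F : fieldType) (w : F -> int) : Prop :=
  (forall x y : F, x != 0 -> y != 0 -> w (x * y) = w x + w y) /\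
  (forall x y : F, x != 0 -> y != 0 -> x + y != 0 ->
      Num.min (w x) (w y) <= w (x + y)).

(* "v(x - y) >= N", with v(0) = +oo *)
Definition vclose (F : fieldType) (w : F -> int) (N : int) (x y : F) : Prop :=
  x = y \/ N <= w (x - y).

(* (K, v) is (a copy of) the field Q_2 with its normalized 2-adic valuation:
   a complete discretely valued field with v(2) = 1 (2 is a uniformizer)
   and residue field F_2.  By the Cohen structure theorem this characterizes
   Q_2 up to isomorphism of valued fields. *)
Definition is_Q2 (K : fieldType) (v : K -> int) : Prop :=
  [/\ is_valuation v,
      v 2 = 1,
      (* residue field is F_2 : every unit is congruent to 1 *)
      (forall x : K, x != 0 -> v x = 0 -> vclose v 1 x 1)
    &
      (forall u : nat -> K,
         (forall N : int, exists n0 : nat, forall p q : nat,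
              (n0 <= p)%N -> (n0 <= q)%N -> vclose v N (u p) (u q)) ->
         exists l : K, forall N : int, exists n0 : nat, forall p : nat,
              (n0 <= p)%N -> vclose v N (u p) l)].

Definition ram_group (K : fieldType) (L : splittingFieldType K)
    (w : L -> int) (pi : L) (i : nat) : {set gal_of {:L}} :=
  [set g in ('Gal({:L} / 1%VS))%g | (g pi == pi) || ((i.+1)%:Z <= w (g pi - pi))].

Definition gal_by_images (K : fieldType) (L : splittingFieldType K)
    (alpha beta : L) (s : seq (L * L)) : {set gal_of {:L}} :=
  [set g in ('Gal({:L} / 1%VS))%g | (g alpha, g beta) \in s].

(* Main.v *)
Require Import Defs.
From HB Require Import structures.
From mathcomp Require Import all_boot all_order all_algebra all_fingroup all_field.
From mathcomp Require Import ring lra zify.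
Import Order.TTheory GRing.Theory Num.Theory.
Set Implicit Arguments. Unset Strict Implicit. Unset Printing Implicit Defensive.
Local Open Scope ring_scope.

Section Val.
Variables (F : fieldType) (w : F -> int) (hw : is_valuation w).

Definition ge (N : int) (x : F) := x = 0 \/ N <= w x.
Definition ex (N : int) (x : F) := x != 0 /\ w x = N.

Lemma wM {x y} : x != 0 -> y != 0 -> w (x * y) = w x + w y.
Proof. by case: hw => h _; apply: h. Qed.

Lemma w1 : w 1 = 0.
Proof. have h := @wM 1 1 (oner_neq0 _) (oner_neq0 _). rewrite mulr1 in h. lia. Qed.

Lemma wN1 : w (-1) = 0.
Proof.
have n1 : (-1 : F) != 0 by rewrite oppr_eq0 oner_neq0.
have h := wM n1 n1; rewrite mulrNN mulr1 w1 in h; lia.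
Qed.

Lemma wN x : x != 0 -> w (- x) = w x.
Proof.
move=> hx; have h1 : (-1 : F) != 0 by rewrite oppr_eq0 oner_neq0.
by rewrite -mulN1r (wM h1 hx) wN1 add0r.
Qed.

Lemma wV x : x != 0 -> w (x^-1) = - w x.
Proof.
move=> hx; have h := wM hx (invr_neq0 hx); rewrite mulfV // w1 in h; lia.
Qed.

Lemma wX x n : x != 0 -> w (x ^+ n) = (n%:Z * w x).
Proof.
move=> hx; elim: n => [|n IH]; first by rewrite expr0 w1 mul0r.
rewrite exprS wM ?expf_neq0 // IH. lia.
Qed.

Lemma wD {x y} : x != 0 -> y != 0 -> x + y != 0 -> Num.min (w x) (w y) <= w (x + y).
Proof. by case: hw => _ h; apply: h. Qed.

Lemma geW N M x : N <= M -> ge M x -> ge N x.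
Proof. move=> h [->|h2]; [by left|right; lia]. Qed.

Lemma ge0 N : ge N 0. Proof. by left. Qed.

Lemma ex_ge {N x} : ex N x -> ge N x.
Proof. by move=> [_ h]; right; rewrite h. Qed.

Lemma geN {N x} : ge N x -> ge N (- x).
Proof.
move=> [->|h]; first by left; rewrite oppr0.
have [->|hx] := eqVneq x 0; first by left; rewrite oppr0.
by right; rewrite wN.
Qed.

Lemma exN {N x} : ex N x -> ex N (- x).
Proof. by move=> [hx h]; split; [rewrite oppr_eq0|rewrite wN]. Qed.

Lemma geD {N x y} : ge N x -> ge N y -> ge N (x + y).
Proof.
have [->|hx] := eqVneq x 0; first by rewrite add0r.
have [->|hy] := eqVneq y 0; first by rewrite addr0.
have [hs|hs] := eqVneq (x + y) 0; first by left.
move=> [/eqP|h1]; first by rewrite (negbTE hx).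
move=> [/eqP|h2]; first by rewrite (negbTE hy).
right; have := wD hx hy hs.
rewrite ge_min => /orP[h|h]; [exact: le_trans h1 h|exact: le_trans h2 h].
Qed.

Lemma geB {N x y} : ge N x -> ge N y -> ge N (x - y).
Proof. by move=> h1 h2; apply: geD => //; apply: geN. Qed.

Lemma geM {N M x y} : ge N x -> ge M y -> ge (N + M) (x * y).
Proof.
have [->|hx] := eqVneq x 0; first by rewrite mul0r; left.
have [->|hy] := eqVneq y 0; first by rewrite mulr0; left.
move=> [/eqP|h1]; first by rewrite (negbTE hx).
move=> [/eqP|h2]; first by rewrite (negbTE hy).
right; rewrite wM //; lia.
Qed.

Lemma exM {N M x y} : ex N x -> ex M y -> ex (N + M) (x * y).
Proof.
move=> [hx h1] [hy h2]; split; first by rewrite mulf_neq0.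
by rewrite wM // h1 h2.
Qed.

Lemma exV {N x} : ex N x -> ex (- N) (x^-1).
Proof. by move=> [hx h]; split; [rewrite invr_eq0|rewrite wV // h]. Qed.

Lemma exX {N x} n : ex N x -> ex (n%:Z * N) (x ^+ n).
Proof. by move=> [hx h]; split; [rewrite expf_neq0|rewrite wX // h]. Qed.

Lemma geX {N x} n : ge N x -> ge (n%:Z * N) (x ^+ n).
Proof.
have [->|hx] := eqVneq x 0.
  case: n => [|n]; last by rewrite expr0n; left.
  by rewrite expr0; right; rewrite w1; lia.
move=> [/eqP|h]; first by rewrite (negbTE hx).
right; rewrite wX //; apply: ler_wpM2l => //.
Qed.

Lemma exD {N x y} : ex N x -> ge (N + 1) y -> ex N (x + y).
Proof.
move=> [hx h1] hy.
have [->|hy0] := eqVneq y 0; first by rewrite addr0.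
case: hy => [/eqP|h2]; first by rewrite (negbTE hy0).
have hs : x + y != 0.
  apply/negP => /eqP hs; have hxy : x = - y by rewrite -[x](addrK y) hs sub0r.
  by move: h1; rewrite hxy wN // => h; lia.
split => //.
have h3 := wD hx hy0 hs.
have h4 : w x >= Num.min (w (x + y)) (w (- y)).
  have hx' : x = (x + y) + (- y) by rewrite addrK.
  rewrite {2}hx'; apply: wD => //; first by rewrite oppr_eq0.
  by rewrite -hx'.
move: h3 h4; rewrite wN // /Num.min; set z := w (x + y); case: ifP => c5 h5; case: ifP => c6 h6; lia.
Qed.

Lemma exDl {N x y} : ge (N + 1) x -> ex N y -> ex N (x + y).
Proof. by move=> h1 h2; rewrite addrC; apply: exD. Qed.

Lemma ex_neq0 {N x} : ex N x -> x != 0. Proof. by case. Qed.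

Lemma exE {N M x} : ex N x -> ex M x -> N = M.
Proof. by move=> [_ h1] [_ h2]; rewrite -h1 -h2. Qed.

Lemma ex_ge_contra {N M x} : ex N x -> ge M x -> N < M -> False.
Proof.
move=> [hx h] [/eqP|h2]; first by rewrite (negbTE hx).
move=> h3; lia.
Qed.

Lemma exW N M x : N = M -> ex N x -> ex M x.
Proof. by move=> ->. Qed.

Lemma sumge (I : eqType) (r : seq I) (P : pred I) (G : I -> F) N :
  (forall i, P i -> ge N (G i)) -> ge N (\sum_(i <- r | P i) G i).
Proof.
move=> h; apply: (big_ind (ge N)) => //; first exact: ge0.
by move=> x y; apply: geD.
Qed.

Lemma ex_sqr {N x y} : x ^+ 2 = y -> ex (2 * N) y -> ex N x.
Proof.
move=> hxy [hy h]; have hx : x != 0.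
  by apply/negP => /eqP hx; move: hy; rewrite -hxy hx expr2 mul0r eqxx.
split => //; move: h; rewrite -hxy wX // => h; lia.
Qed.


Lemma ex_pair {N M x y} : ex (2 * N) (x * y) -> ex M (x - y) -> N < M ->
  ex N x /\ ex N y.
Proof.
move=> [hxy hw2] hd hNM.
have hx : x != 0 by apply: contraNneq hxy => ->; rewrite mul0r.
have hy : y != 0 by apply: contraNneq hxy => ->; rewrite mulr0.
rewrite wM // in hw2.
have [hlt|hge] := ltP (w x) (w y).
  have := @exD (w x) x (- y) (conj hx erefl).
  have hny : ge (w x + 1) (- y) by apply: geN; right; lia.
  move=> /(_ hny) h; have := exE h hd => h2; lia.
have [hlt2|hge2] := ltP (w y) (w x).
  have := @exDl (w y) x (- y).
  have hx1 : ge (w y + 1) x by right; lia.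
  move=> /(_ hx1 (exN (conj hy erefl))) h; have := exE h hd => h2; lia.
split; split => //; lia.
Qed.

Lemma dist_sum n (G : nat -> F) :
  (forall i j, (i < n)%N -> (j < n)%N -> i != j -> G i != 0 -> G j != 0 ->
     w (G i) != w (G j)) ->
  (forall i, (i < n)%N -> G i = 0) \/
  exists j, [/\ (j < n)%N, G j != 0, ex (w (G j)) (\sum_(i < n) G i)
    & forall i, (i < n)%N -> G i != 0 -> w (G j) <= w (G i)].
Proof.
elim: n => [|n IH] hd.
  by left.
have hd' : forall i j, (i < n)%N -> (j < n)%N -> i != j -> G i != 0 -> G j != 0 ->
     w (G i) != w (G j).
  by move=> i j hi hj; apply: hd; apply: ltnW.
rewrite big_ord_recr /=.
case: (IH hd') => [hz|[j [hj hGj hS hmin]]].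
  rewrite big1 ?add0r; last by move=> i _; apply: hz.
  have [hn|hn] := eqVneq (G n) 0.
    by left => i; rewrite ltnS leq_eqVlt => /orP[/eqP->//|]; apply: hz.
  right; exists n; split => //.
  move=> i; rewrite ltnS leq_eqVlt => /orP[/eqP->//|hi]; by rewrite hz ?eqxx.
have [hn|hn] := eqVneq (G n) 0.
  right; exists j; split => //; first exact: ltnW.
    by rewrite hn addr0.
  by move=> i; rewrite ltnS leq_eqVlt => /orP[/eqP->|hi]; [rewrite hn eqxx|apply: hmin].
have hne := hd j n (ltnW hj) (ltnSn n) (negbT (ltn_eqF hj)) hGj hn.
have [hlt|hge] := ltP (w (G n)) (w (G j)).
  right; exists n; split => //.
    apply: exDl => //; apply: geW (ex_ge hS); move: hlt; set a := w (G n); set b := w (G j); lia.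
  move=> i; rewrite ltnS leq_eqVlt => /orP[/eqP->//|hi hGi].
  have := hmin i hi hGi; lia.
right; exists j; split => //; first exact: ltnW.
  apply: exD => //; right; move: hne hge; set a := w (G n); set b := w (G j).
  move=> /eqP hne hge; lia.
move=> i; rewrite ltnS leq_eqVlt => /orP[/eqP-> _|hi]; [exact: hge|exact: hmin].
Qed.

Section Ints.
Hypothesis h2 : ex 8 2.

Lemma ge0_nat n : ge 0 (n%:R).
Proof.
elim: n => [|n IH]; first by left.
rewrite -addn1 natrD; apply: geD => //; right; rewrite w1.
done.
Qed.

Lemma ge0_int (z : int) : ge 0 (z%:~R).
Proof.
case: z => n; first by rewrite -pmulrn; apply: ge0_nat.
by rewrite NegzE mulrNz -pmulrn; apply: geN; apply: ge0_nat.
Qed.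

Lemma ge8_even (z : int) : (2 %| z)%Z -> ge 8 (z%:~R).
Proof.
move=> hz; have -> : z = (z %/ 2)%Z * 2 by lia.
rewrite intrM; have -> : (8 : int) = 0 + 8 by [].
by apply: geM; [apply: ge0_int|apply: ex_ge].
Qed.

Lemma ex0_odd (z : int) : odd `|z|%N -> ex 0 (z%:~R).
Proof.
move=> hz; have -> : z = 1 + (z - 1) by rewrite addrC subrK.
rewrite intrD; apply: exD; first by split; [rewrite oner_neq0|rewrite w1].
apply: (@geW (0+1) 8) => //; apply: ge8_even; lia.
Qed.

End Ints.

End Val.

Definition tt_of (F : fieldType) (D A i : F) := i - (1 + D + A ^+ 3).
Definition pp_of (F : fieldType) (D A i : F) := tt_of D A i / (D * A).

Section Core.
Variables (F : fieldType) (w : F -> int) (hw : is_valuation w).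
Hypothesis h2 : ex w 8 2.
Variables (k : nat) (m : int).
Hypothesis hk : (1 <= k)%N.
Hypothesis hm : odd `|m|%N.

Definition PP : F := 2 ^+ k.
Definition mm : F := m%:~R.
Definition mu : F := (- mm) ^+ k.

Definition Rel (D A i : F) := [/\ D ^+ 2 = - (2 * mm),
   A ^+ 2 = D * (1 + PP * D) * mu & i ^+ 2 = - (1 + 2 * PP ^+ 2 * mm)].

Lemma exP : ex w (8 * k%:Z) PP.
Proof. by apply: exW (exX hw k h2); lia. Qed.

Lemma exm : ex w 0 mm.
Proof. exact: ex0_odd. Qed.

Lemma exmu : ex w 0 mu.
Proof. by apply: exW (exX hw k (exN hw exm)); lia. Qed.

Lemma exS1 : ex w 0 (1 : F).
Proof. by split; [apply: oner_neq0|apply: w1]. Qed.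

Lemma core D A i : Rel D A i ->
  [/\ ex w 4 D, ex w 2 A, ex w 0 i, ex w 7 (tt_of D A i) & ex w 1 (pp_of D A i)].
Proof.
case=> hD hA hi.
have eD : ex w 4 D.
  apply: (ex_sqr hw (N:=4) hD); apply: (exN hw); apply: exW (exM hw h2 exm); lia.
have ePD := exM hw exP eD.
have e1PD : ex w 0 (1 + PP * D).
  apply: (exD hw exS1); apply: (geW _ (ex_ge ePD)); lia.
have eA : ex w 2 A.
  apply: (ex_sqr hw (N:=2) hA); apply: exW (exM hw (exM hw eD e1PD) exmu); lia.
have eP2m := exM hw (exM hw h2 (exX hw 2 exP)) exm.
have ei : ex w 0 i.
  apply: (ex_sqr hw (N:=0) hi); apply: (exN hw); apply: exW (exD hw exS1 _) => //.
  apply: (geW _ (ex_ge eP2m)); lia.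
pose s := 1 + D + A ^+ 3.
have eA3 := exX hw 3 eA.
have es : ex w 0 s.
  apply: (exD hw); last by apply: (geW _ (ex_ge eA3)); lia.
  apply: (exD hw exS1); apply: (geW _ (ex_ge eD)); lia.
pose t := tt_of D A i.
pose Fv := s ^+ 2 + 1 + 2 * PP ^+ 2 * mm.
have hE : t ^+ 2 + 2 * t * s + Fv = 0.
  rewrite /Fv /t /tt_of -/s; ring: hi.
pose R := 2 * (1 - mm) + 2 * D * (1 - mm * ((1 + PP * D) * mu) ^+ 3)
   + 2 * D * A ^+ 3 + 2 * PP ^+ 2 * mm.
have eF : Fv = 2 * A ^+ 3 + R.
  rewrite /Fv /R /s; ring: hD hA.
have gT1 : ge w 15 (2 * (1 - mm)).
  have -> : 1 - mm = (1 - m)%:~R by rewrite /mm rmorphB rmorph1.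
  apply: (geW _ (geM hw (ex_ge h2) (ge8_even hw h2 _))); first by [].
  lia.
have gx : ge w 0 (PP * D) by apply: (geW _ (ex_ge ePD)); lia.
have gT2 : ge w 15 (2 * D * (1 - mm * ((1 + PP * D) * mu) ^+ 3)).
  have -> : 1 - mm * ((1 + PP * D) * mu) ^+ 3 = (1 - mm * mu ^+ 3)
      - mm * mu ^+ 3 * ((PP * D) * (3%:R + 3%:R * (PP * D) + (PP * D) ^+ 2)).
    by ring.
  have g1 : ge w 8 (1 - mm * mu ^+ 3).
    have -> : 1 - mm * mu ^+ 3 = ((1 - m * (- m) ^+ (k * 3))%R : int)%:~R.
      by rewrite /mu /mm rmorphB rmorph1 rmorphM rmorphXn rmorphN exprM.
    apply: ge8_even => //.
    have : odd `|(m * (- m) ^+ (k * 3))%R|%N by rewrite abszM abszX abszN oddM oddX hm orbT.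
    lia.
  have g2 : ge w 8 (mm * mu ^+ 3 * ((PP * D) * (3%:R + 3%:R * (PP * D) + (PP * D) ^+ 2))).
    have g3 : ge w 0 (3%:R + 3%:R * (PP * D) + (PP * D) ^+ 2).
      apply: (geD hw); last by apply: (geW _ (geX hw 2 gx)); lia.
      apply: (geD hw (ge0_nat hw 3)); apply: (geW _ (geM hw (ge0_nat hw 3) gx)); lia.
    apply: (geW _ (geM hw (geM hw (ex_ge exm) (ex_ge (exX hw 3 exmu))) (geM hw (ex_ge ePD) g3))).
    lia.
  apply: (geW _ (geM hw (geM hw (ex_ge h2) (ex_ge eD)) (geB hw g1 g2))); lia.
have gT3 : ge w 15 (2 * D * A ^+ 3).
  by apply: (geW _ (ex_ge (exM hw (exM hw h2 eD) eA3))); lia.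
have gT4 : ge w 15 (2 * PP ^+ 2 * mm).
  by apply: (geW _ (ex_ge eP2m)); lia.
have gR : ge w 15 R by rewrite /R; apply: (geD hw); [apply: (geD hw); [apply: (geD hw)|]|].
have eFv : ex w 14 Fv.
  rewrite eF; apply: (exD hw) => //; apply: exW (exM hw h2 eA3); lia.
have ht0 : t != 0.
  apply/negP => /eqP ht; move: hE; rewrite ht expr0n /= mulr0 mul0r !add0r => hF.
  by move: (ex_neq0 eFv); rewrite hF eqxx.
have eta : ex w (w t) t by split.
have et : ex w 7 t.
  have : w t <= 6 \/ w t = 7 \/ 8 <= w t by lia.
  case=> [hle|[heq|hge]]; last first.
  - exfalso; have g1 : ge w (14 + 1) (t ^+ 2 + 2 * t * s).
      apply: (geD hw).
        by apply: (geW _ (ex_ge (exX hw 2 eta))); lia.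
      by apply: (geW _ (ex_ge (exM hw (exM hw h2 eta) es))); lia.
    have := exDl hw g1 eFv; rewrite hE => /ex_neq0; by rewrite eqxx.
  - by split.
  - exfalso; have g1 : ge w (2 * w t + 1) (2 * t * s + Fv).
      apply: (geD hw).
        by apply: (geW _ (ex_ge (exM hw (exM hw h2 eta) es))); lia.
      by apply: (geW _ (ex_ge eFv)); lia.
    have := exD hw (exX hw 2 eta) g1.
    rewrite addrA hE => /ex_neq0; by rewrite eqxx.
split => //.
rewrite /pp_of -/t; apply: exW (exM hw et (exV hw (exM hw eD eA))); lia.
Qed.

Lemma grp1 D A i : Rel D A i -> ex w 2 (pp_of D (- A) (- i) - pp_of D A i).
Proof.
move=> hR; have [eD eA ei et ep] := core hR.
have hD0 := ex_neq0 eD; have hA0 := ex_neq0 eA.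
have -> : pp_of D (- A) (- i) - pp_of D A i = 2 * (1 + D) / (D * A).
  by rewrite /pp_of /tt_of; field; rewrite ?oppr_eq0 ?hA0 ?hD0.
have e1D : ex w 0 (1 + D).
  by apply: (exD hw exS1); apply: (geW _ (ex_ge eD)); lia.
apply: exW (exM hw (exM hw h2 e1D) (exV hw (exM hw eD eA))); lia.
Qed.

Lemma grp2 D A i : Rel D A i -> ex w 2 (pp_of D A (- i) - pp_of D A i).
Proof.
move=> hR; have [eD eA ei et ep] := core hR.
have hD0 := ex_neq0 eD; have hA0 := ex_neq0 eA.
have -> : pp_of D A (- i) - pp_of D A i = - (2 * i) / (D * A).
  by rewrite /pp_of /tt_of; field; rewrite ?oppr_eq0 ?hA0 ?hD0.
apply: exW (exM hw (exN hw (exM hw h2 ei)) (exV hw (exM hw eD eA))); lia.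
Qed.

Lemma grp3 D A i : Rel D A i -> ex w 8 (pp_of D (- A) i - pp_of D A i).
Proof.
move=> hR; have [eD eA ei et ep] := core hR.
have hD0 := ex_neq0 eD; have hA0 := ex_neq0 eA.
have -> : pp_of D (- A) i - pp_of D A i = - (2 * (tt_of D A i + A ^+ 3)) / (D * A).
  by rewrite /pp_of /tt_of; field; rewrite ?oppr_eq0 ?hA0 ?hD0.
have e6 : ex w 6 (tt_of D A i + A ^+ 3).
  apply: (exDl hw); first by apply: (geW _ (ex_ge et)); lia.
  by apply: exW (exX hw 3 eA); lia.
apply: exW (exM hw (exN hw (exM hw h2 e6)) (exV hw (exM hw eD eA))); lia.
Qed.

Lemma grp_aux D A i A' i' : Rel D A i -> Rel (- D) A' i' ->
  [/\ ex w 2 A', ex w 6 (A + A'), ex w 10 (A ^+ 3 - A' ^+ 3)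
    & ex w 5 (tt_of D A i * (((- D) * A')^-1 - (D * A)^-1))].
Proof.
move=> hR hR'; have [eD eA ei et ep] := core hR.
have [eD' eA' ei' et' ep'] := core hR'.
case: hR => hD hA hi; case: hR' => hD' hA' hi'.
have hD0 := ex_neq0 eD; have hA0 := ex_neq0 eA; have hA0' := ex_neq0 eA'.
have hprod : (A + A') * (A - A') = 2 * D * mu by ring: hA hA'.
have e12 : ex w (2 * 6) ((A + A') * (A - A')).
  by rewrite hprod; apply: exW (exM hw (exM hw h2 eD) exmu); lia.
have hdiff : (A + A') - (A - A') = 2 * A' by ring.
have e10 : ex w 10 ((A + A') - (A - A')).
  by rewrite hdiff; apply: exW (exM hw h2 eA'); lia.
have [ep6 em6] := ex_pair hw e12 e10 (erefl true).
have e3 : ex w 10 (A ^+ 3 - A' ^+ 3).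
  have -> : A ^+ 3 - A' ^+ 3 = (A - A') * (- (A * A') + (A + A') ^+ 2) by ring.
  have e4 : ex w 4 (- (A * A') + (A + A') ^+ 2).
    apply: (exD hw); first by apply: (exN hw); apply: exW (exM hw eA eA'); lia.
    by apply: (geW _ (ex_ge (exX hw 2 ep6))); lia.
  by apply: exW (exM hw em6 e4); lia.
split => //.
have -> : (- D * A')^-1 - (D * A)^-1 = - (A + A') / (D * A * A').
  by field; rewrite ?oppr_eq0 ?hA0 ?hD0 ?hA0'.
apply: exW (exM hw et (exM hw (exN hw ep6) (exV hw (exM hw (exM hw eD eA) eA')))).
lia.
Qed.

Lemma grp4 D A i A' i' : Rel D A i -> Rel (- D) A' i' -> i' = - i ->
  ex w 2 (pp_of (- D) A' i' - pp_of D A i).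
Proof.
move=> hR hR' hi; have [eA' ep e3 eT] := grp_aux hR hR'.
have [eD eA ei et _] := core hR.
have -> : pp_of (- D) A' i' - pp_of D A i =
   (tt_of (- D) A' i' - tt_of D A i) * ((- D) * A')^-1 +
   tt_of D A i * (((- D) * A')^-1 - (D * A)^-1) by rewrite /pp_of; ring.
have -> : tt_of (- D) A' i' - tt_of D A i = - (2 * i) + (2 * D + (A ^+ 3 - A' ^+ 3)).
  by rewrite /tt_of hi; ring.
apply: (exD hw); last by apply: (geW _ (ex_ge eT)); lia.
have e8 : ex w 8 (- (2 * i) + (2 * D + (A ^+ 3 - A' ^+ 3))).
  apply: (exD hw); first by apply: (exN hw); apply: exW (exM hw h2 ei); lia.
  apply: (geD hw); last by apply: (geW _ (ex_ge e3)); lia.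
  by apply: (geW _ (ex_ge (exM hw h2 eD))); lia.
apply: exW (exM hw e8 (exV hw (exM hw (exN hw eD) eA'))); lia.
Qed.

Lemma grp5 D A i A' i' : Rel D A i -> Rel (- D) A' i' -> i' = i ->
  ex w 4 (pp_of (- D) A' i' - pp_of D A i).
Proof.
move=> hR hR' hi; have [eA' ep e3 eT] := grp_aux hR hR'.
have [eD eA ei et _] := core hR.
have -> : pp_of (- D) A' i' - pp_of D A i =
   (tt_of (- D) A' i' - tt_of D A i) * ((- D) * A')^-1 +
   tt_of D A i * (((- D) * A')^-1 - (D * A)^-1) by rewrite /pp_of; ring.
have -> : tt_of (- D) A' i' - tt_of D A i = 2 * D + (A ^+ 3 - A' ^+ 3).
  by rewrite /tt_of hi; ring.
apply: (exD hw); last by apply: (geW _ (ex_ge eT)); lia.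
have e10 : ex w 10 (2 * D + (A ^+ 3 - A' ^+ 3)).
  apply: (exDl hw) => //.
  by apply: (geW _ (ex_ge (exM hw h2 eD))); lia.
apply: exW (exM hw e10 (exV hw (exM hw (exN hw eD) eA'))); lia.
Qed.

End Core.

Lemma adeg_le (K : fieldType) (L : fieldExtType K) (U : {subfield L}) (x : L) (p : {poly L}) n :
  p \is a polyOver U -> root p x -> p != 0 -> (size p <= n.+1)%N ->
  (adjoin_degree U x <= n)%N.
Proof.
move=> hp hr hp0 hs.
have := dvdp_leq hp0 (minPoly_dvdp hp hr); rewrite size_minPoly => h.
by rewrite -ltnS (leq_trans h hs).
Qed.

Lemma dim8 (K : fieldType) (L : fieldExtType K) (c a b : L) :
  c \in (1%VS : {vspace L}) -> (a ^+ 2 + c) ^+ 2 + c = 0 ->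
  b ^+ 2 \in <<1; a>>%VS -> (\dim <<1 & [:: a; b]>> <= 8)%N.
Proof.
move=> hc ha hb.
rewrite adjoin_cons adjoin_seq1.
have -> : <<1; a>>%VS = <<1; a>>%AS by [].
rewrite dim_Fadjoin.
have -> : (<<1; a>>%AS : {vspace L}) = <<(1%AS : {subfield L}); a>>%AS by [].
rewrite dim_Fadjoin /= dimv1 muln1.
have d1 : (adjoin_degree (1%AS : {subfield L}) a <= 4)%N.
  pose q : {poly L} := 'X^2 + c%:P.
  have sq : size q = 3 by rewrite size_XnaddC.
  have sq2 : size (q ^+ 2) = 5.
    have := size_exp q 2; rewrite sq /=; case: (size _) => // n /= ->. by [].
  apply: (adeg_le (p := q ^+ 2 + c%:P)).
  - by rewrite rpredD ?rpredX ?polyOverXnaddC ?polyOverC.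
  - by rewrite /root !hornerE ha.
  - by rewrite -size_poly_eq0 size_polyDl sq2 // (leq_ltn_trans (size_polyC_leq1 _)).
  - by rewrite size_polyDl sq2 // (leq_ltn_trans (size_polyC_leq1 _)).
have d2 : (adjoin_degree <<1; a>>%AS b <= 2)%N.
  apply: (adeg_le (p := 'X^2 + (- b ^+ 2)%:P)).
  - by rewrite polyOverXnaddC rpredN.
  - by rewrite /root !hornerE addrN.
  - by rewrite -size_poly_eq0 size_XnaddC.
  - by rewrite size_XnaddC.
by have := leq_mul d2 d1.
Qed.

Section Unif.
Variables (K : fieldType) (L : splittingFieldType K) (v : K -> int) (w : L -> int).
Hypothesis hw : is_valuation w.
Hypothesis hwv : forall x : K, x != 0 -> w (x%:A) = 8 * v x.
Hypothesis hdim : (\dim {:L} <= 8)%N.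
Variables (p0 : L).
Hypothesis e0 : ex w 1 p0.

Lemma alg_neq0 (a : K) : a != 0 -> (a%:A : L) != 0.
Proof. by move=> ha; rewrite -in_algE fmorph_eq0. Qed.

Lemma wt (a : K) j : a != 0 -> ex w (8 * v a + j%:Z) (a%:A * p0 ^+ j).
Proof.
move=> ha; have e := exM hw (conj (alg_neq0 ha) (hwv ha)) (exX hw j e0).
by apply: exW e; lia.
Qed.

Lemma distinct8 (a : nat -> K) :
  forall i j, (i < 8)%N -> (j < 8)%N -> i != j ->
    (a i)%:A * p0 ^+ i != 0 -> (a j)%:A * p0 ^+ j != 0 ->
    w ((a i)%:A * p0 ^+ i) != w ((a j)%:A * p0 ^+ j).
Proof.
move=> i j hi hj hij hGi hGj.
have hai : a i != 0 by apply: contraNneq hGi => ->; rewrite scale0r mul0r.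
have haj : a j != 0 by apply: contraNneq hGj => ->; rewrite scale0r mul0r.
have [_ ->] := wt i hai; have [_ ->] := wt j haj.
apply/negP => /eqP h; move/eqP: hij; lia.
Qed.

Definition Xb : 8.-tuple L := [tuple p0 ^+ i | i < 8].

Lemma Xb_nth (i : 'I_8) : Xb`_i = p0 ^+ i.
Proof. by rewrite -tnth_nth tnth_mktuple. Qed.

Lemma Xb_free : free Xb.
Proof.
apply/freeP => kk hs i.
pose a := fun j : nat => kk (inord j).
have hs' : \sum_(j < 8) (a j)%:A * p0 ^+ j = 0.
  rewrite -[RHS]hs; apply: eq_bigr => j _; by rewrite /a inord_val Xb_nth mulr_algl.
have [hz|[j [hj hGj he _]]] := dist_sum hw (@distinct8 a).
  have := hz i (ltn_ord i); rewrite /a inord_val => /eqP.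
  rewrite mulf_eq0 expf_eq0 (negbTE (ex_neq0 e0)) andbF orbF => /eqP h.
  by apply/eqP; move: (alg_neq0 (a := kk i)); rewrite h eqxx; case: eqP => // _ /(_ isT).
by move: (ex_neq0 he); rewrite hs' eqxx.
Qed.

Lemma Xb_span : <<Xb>>%VS = fullv.
Proof.
apply/eqP; rewrite eqEdim subvf /=.
have := Xb_free; rewrite /free size_tuple => /eqP ->; exact: hdim.
Qed.

Lemma expand (pi : L) : exists a : nat -> K,
  pi = \sum_(i < 8) (a i)%:A * p0 ^+ i.
Proof.
have hm : pi \in <<Xb>>%VS by rewrite Xb_span memvf.
exists (fun j => coord Xb (inord j) pi).
rewrite {1}(coord_span hm); apply: eq_bigr => j _.
by rewrite inord_val Xb_nth mulr_algl.
Qed.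

Lemma unif (pi : L) (e1 : ex w 1 pi) (g : gal_of {:L})
  (hg : forall a : K, g (a%:A) = a%:A) (N : int) (hN : 1 <= N)
  (eg : ex w 1 (g p0)) (eN : ex w N (g p0 - p0)) : ex w N (g pi - pi).
Proof.
have [a ha] := expand pi.
have [hz|[j [hj hGj he hmin]]] := dist_sum hw (@distinct8 a).
  by move: (ex_neq0 e1); rewrite ha big1 ?eqxx // => i _; apply: hz.
rewrite -ha in he; have hw1 := exE he e1.
have haj : a j != 0 by apply: contraNneq hGj => ->; rewrite scale0r mul0r.
have [_ hwj] := wt j haj.
have hj1 : j = 1%N by move: hw1; rewrite hwj; lia.
subst j.
have ea1 : ex w 0 ((a 1%N)%:A).
  split; first exact: alg_neq0; rewrite hwv //; move: hw1; rewrite hwj; lia.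
have ga : forall i, (i < 8)%N -> ge w 0 ((a i)%:A).
  move=> i hi; have [hai|hai] := eqVneq (a i) 0; first by left; rewrite hai scale0r.
  right; have hGi : (a i)%:A * p0 ^+ i != 0 by apply: ex_neq0 (wt i hai).
  have := hmin i hi hGi; have [_ ->] := wt i hai; rewrite hwv // hwj; lia.
have -> : g pi - pi = \sum_(i < 8) (a i)%:A * (g p0 ^+ i - p0 ^+ i).
  rewrite ha rmorph_sum -sumrB; apply: eq_bigr => i _.
  rewrite rmorphM [X in X * _ - _](_ : _ = (a i)%:A); last exact: hg.
  by rewrite rmorphXn mulrBr.
rewrite -(big_mkord xpredT (fun i => (a i)%:A * (g p0 ^+ i - p0 ^+ i))).
rewrite big_ltn // big_ltn // expr0 subrr mulr0 add0r expr1.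
apply: (exD hw); first by apply: exW (exM hw ea1 eN); lia.
rewrite big_nat; apply: (sumge hw) => i /andP[h2 h8].
case: i h2 h8 => [|[|j]] // _ h8.
rewrite subrXX.
have gs : ge w (j.+1)%:Z (\sum_(l < j.+2) g p0 ^+ (j.+1 - l) * p0 ^+ l).
  apply: (sumge hw) => l _; apply: ex_ge.
  apply: exW (exM hw (exX hw _ eg) (exX hw _ e0)).
  have := ltn_ord l; lia.
apply: (geW _ (geM hw (ga _ h8) (geM hw (ex_ge eN) gs))); lia.
Qed.
End Unif.

Section Gal.
Variables (K : fieldType) (L : splittingFieldType K) (k : nat) (m : int).
Variable g : gal_of {:L}.

Lemma relg D A i : Rel k m D A i -> Rel k m (g D) (g A) (g i).
Proof.
rewrite /Rel /PP /mu /mm; case=> h1 h2 h3; split.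
- by rewrite -rmorphXn h1 !(rmorphN, rmorphM, rmorphD, rmorph1, rmorphXn, rmorph_int, rmorph_nat).
- by rewrite -rmorphXn h2 !(rmorphN, rmorphM, rmorphD, rmorph1, rmorphXn, rmorph_int, rmorph_nat).
- by rewrite -rmorphXn h3 !(rmorphN, rmorphM, rmorphD, rmorph1, rmorphXn, rmorph_int, rmorph_nat).
Qed.

Lemma gpp D A i : g (pp_of D A i) = pp_of (g D) (g A) (g i).
Proof.
by rewrite /pp_of /tt_of fmorph_div rmorphM rmorphB !rmorphD rmorph1 rmorphXn.
Qed.
End Gal.

Ltac norm FF := rewrite ?inE ?xpair_eqE ?eqr_opp ?eqr_oppLR ?eqxx ?FF /=
  ?andbT ?andbF ?orbF ?orbT ?lez_nat //.

Unset Implicit Arguments.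
Set Strict Implicit.

Theorem proposition7p4
  (K : fieldType) (v : K -> int) (hK : is_Q2 v)
  (k : nat) (hk : (1 <= k)%N) (m : int) (hm : odd `|m|%N)
  (L : splittingFieldType K)
  (delta alpha beta : L)
  (hdelta : delta ^+ 2 = - ((2 ^+ (2 * k + 1) * m)%:~R))
  (halpha : alpha ^+ 2 = - ((2 ^+ (2 * k + 1) * m)%:~R) + delta)
  (hbeta : beta ^+ 2 = - ((2 ^+ (2 * k + 1) * m)%:~R) - delta)
  (hgen : (<< 1%VS & [:: alpha; beta] >>)%VS = fullv)
  (w : L -> int) (hw : is_valuation w)
  (hwv : forall x : K, x != 0 -> w (x%:A) = 8 * v x)
  (pi : L) (hpi0 : pi != 0) (hpi : w pi = 1) :
  let G := ram_group w pi in
  let S := gal_by_images alpha beta in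
  [/\ G 0%N = ('Gal({:L} / 1%VS))%g /\ G 1%N = ('Gal({:L} / 1%VS))%g,
      G 2%N = S [:: (alpha, beta); (-alpha, -beta); (-beta, alpha); (beta, -alpha)]
        /\ G 3%N = G 2%N,
      (forall n : nat, (4 <= n <= 7)%N ->
         G n = S [:: (alpha, beta); (-alpha, -beta)])
    & (forall n : nat, (8 <= n)%N -> G n = [set 1%g])].
Proof.
move=> G S.
case: hK => hv hv2 _ _.
set c : L := (2 ^+ (2 * k + 1) * m)%:~R.
have e1 : ex w 1 pi by [].
have h2L : (2 : L) = (2 : K)%:A by rewrite -in_algE rmorph_nat.
have hK2 : (2 : K) != 0.
  apply/negP => /eqP h20; exfalso.
  have h2 : (2 : L) = 0 by rewrite h2L h20 scale0r.
  have hc0 : c = 0 by rewrite /c rmorphM rmorphXn /= exprD expr1 rmorph_nat h2 !mulr0 mul0r.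
  have hd : delta = 0.
    by apply/eqP; have := expf_eq0 delta 2; rewrite hdelta -/c hc0 oppr0 eqxx => /esym/andP[].
  have ha : alpha = 0.
    by apply/eqP; have := expf_eq0 alpha 2; rewrite halpha -/c hc0 hd oppr0 addr0 eqxx => /esym/andP[].
  have hb : beta = 0.
    by apply/eqP; have := expf_eq0 beta 2; rewrite hbeta -/c hc0 hd oppr0 addr0 eqxx => /esym/andP[].
  have h10 : <<(1%AS : {subfield L}); 0>>%VS = 1%VS by apply/Fadjoin_idP; rewrite mem0v.
  move: hgen; rewrite ha hb adjoin_cons adjoin_seq1 h10 h10 => hf.
  have : pi \in (1%VS : {vspace L}) by rewrite hf memvf.
  move=> /vlineP[a ha'].
  have ha0 : a != 0 by apply: contraNneq hpi0 => h0; rewrite ha' h0 scale0r.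
  by move: hpi; rewrite ha' hwv //; lia.
have e2 : ex w 8 (2 : L) by split; [rewrite h2L alg_neq0 | rewrite h2L hwv // hv2].
have hc : c = 2 * PP L k ^+ 2 * mm L m.
  rewrite /c /PP /mm rmorphM rmorphXn /= rmorph_nat exprD expr1 -exprM mulnC.
  by rewrite [_ ^+ _ * 2]mulrC.
have eP := exP hw e2 hk hm.
have em := exm hw e2 hm.
have ec := exM hw (exM hw e2 (exX hw 2 eP)) em; rewrite -hc in ec.
have hP0 := ex_neq0 eP.
have hd0 : delta != 0.
  apply/negP => /eqP hd; move: (ex_neq0 ec); rewrite -oppr_eq0 -hdelta hd expr0n /=.
  by rewrite eqxx.
have [D hD] : {D : L | D = delta / PP L k} by exists (delta / PP L k).
have [A hA] : {A : L | A = alpha * D ^+ k / PP L k} by exists (alpha * D ^+ k / PP L k).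
have [i0 hi0] : {i0 : L | i0 = alpha * beta / delta} by exists (alpha * beta / delta).
have hdD : delta = PP L k * D by rewrite hD; field.
have hR : Rel k m D A i0.
  split.
  - rewrite hD expr_div_n hdelta -/c hc; field => //.
  - have hDk : (D ^+ k) ^+ 2 = PP L k * mu L k m.
      rewrite -exprM mulnC exprM.
      have -> : D ^+ 2 = 2 * (- mm L m) by rewrite hD expr_div_n hdelta -/c hc; field.
      by rewrite exprMn.
    rewrite hA expr_div_n !exprMn hDk halpha -/c.
    have -> : - c = delta ^+ 2 by rewrite hdelta.
    rewrite hdD; field => //.
  - rewrite hi0 expr_div_n exprMn halpha hbeta -/c.
    have -> : - c = delta ^+ 2 by rewrite hdelta.
    have -> : 1 + 2 * PP L k ^+ 2 * mm L m = 1 - delta ^+ 2 by rewrite hdelta opprK -/c hc.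
    field => //.
have [eD eA ei et ep] := core hw e2 hk hm hR.
pose p0 := pp_of D A i0.
have hdim : (\dim {:L} <= 8)%N.
  rewrite -hgen; apply: (@dim8 _ _ c).
  - by rewrite /c rpred_int.
  - have -> : alpha ^+ 2 + c = delta by rewrite halpha -/c; ring.
    by rewrite hdelta -/c addNr.
  - have -> : beta ^+ 2 = - (2 * c) - alpha ^+ 2.
      by rewrite hbeta halpha -/c; ring.
    rewrite rpredB ?rpredN ?rpredM ?rpredX ?memv_adjoin //; apply: (subvP (subv_adjoin 1%VS alpha)).
    + by rewrite rpred_nat.
    + by rewrite /c rpred_int.
have hdelta' : delta ^+ 2 = - c by rewrite hdelta.
have halpha' : alpha ^+ 2 = - c + delta by rewrite halpha.
have hbeta' : beta ^+ 2 = - c - delta by rewrite hbeta.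
have hi00 := ex_neq0 ei.
have ha0 : alpha != 0 by apply: contraNneq hi00 => h0; rewrite hi0 h0 !mul0r.
have hb0 : beta != 0 by apply: contraNneq hi00 => h0; rewrite hi0 h0 mulr0 mul0r.
have h20 := ex_neq0 e2.
have hab : alpha ^+ 2 != beta ^+ 2.
  rewrite halpha' hbeta'; apply/negP => /eqP h.
  have h' : 2 * delta = (- c + delta) - (- c - delta) by ring.
  by move: (mulf_neq0 h20 hd0); rewrite h' h subrr eqxx.
have Fneg : forall x : L, x != 0 -> (x == - x) = false.
  move=> x hx; apply/negP => /eqP h; have h' : 2 * x = x - (- x) by ring.
  by move: (mulf_neq0 h20 hx); rewrite h' -h subrr eqxx.
have Faa := Fneg _ ha0; have Fbb := Fneg _ hb0.
have Fab : (alpha == beta) = false by apply/negP => /eqP h; move: hab; rewrite h eqxx.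
have Fba : (beta == alpha) = false by rewrite eq_sym.
have Fabn : (alpha == - beta) = false by apply/negP => /eqP h; move: hab; rewrite h sqrrN eqxx.
have Fban : (beta == - alpha) = false by apply/negP => /eqP h; move: hab; rewrite h sqrrN eqxx.
have ident : forall g : gal_of {:L}, g alpha = alpha -> g beta = beta -> g = 1%g.
  move=> g hga hgb; apply/eqP/gal_eqP => x _; rewrite gal_id.
  have sub : (<<1 & [:: alpha; beta]>> <= fixedField [set g])%VS.
    apply/Fadjoin_seqP; split; first exact: sub1v.
    move=> y; rewrite !inE => /orP[/eqP->|/eqP->]; apply/fixedFieldP; rewrite ?memvf //;
      move=> h; rewrite inE => /eqP ->; [exact: hga|exact: hgb].
  have := subvP sub x; rewrite hgen memvf => /(_ isT) /mem_fixedFieldP[_ ->] //.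
  by rewrite inE.
have master : forall g : gal_of {:L}, g \in ('Gal({:L} / 1%VS))%g ->
  [\/ g = 1%g,
      ex w 2 (g pi - pi) /\ (g alpha, g beta) \in [:: (- alpha, beta); (alpha, - beta); (beta, alpha); (- beta, - alpha)],
      ex w 4 (g pi - pi) /\ (g alpha, g beta) \in [:: (- beta, alpha); (beta, - alpha)]
    | ex w 8 (g pi - pi) /\ (g alpha, g beta) = (- alpha, - beta)].
  move=> g hg.
  have hgK : forall a : K, g (a%:A) = a%:A.
    by move=> a; apply: (fixed_gal (sub1v _) hg); rewrite rpredZ ?mem1v.
  have gc : g c = c by rewrite /c rmorph_int.
  have hgd2 : (g delta) ^+ 2 = delta ^+ 2 by rewrite -rmorphXn hdelta' rmorphN /c rmorph_int.
  have hga2 : (g alpha) ^+ 2 = - c + g delta by rewrite -rmorphXn halpha' rmorphD rmorphN /c rmorph_int.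
  have hgb2 : (g beta) ^+ 2 = - c - g delta by rewrite -rmorphXn hbeta' rmorphB rmorphN /c rmorph_int.
  have gD : g D = g delta / PP L k by rewrite hD fmorph_div /PP rmorphXn rmorph_nat.
  have gA : g A = g alpha * (g D) ^+ k / PP L k.
    by rewrite hA fmorph_div rmorphM rmorphXn /PP rmorphXn rmorph_nat.
  have gi : g i0 = g alpha * g beta / g delta by rewrite hi0 fmorph_div rmorphM.
  have hRg := relg g hR.
  have eg : ex w 1 (g p0) by rewrite /p0 gpp; case: (core hw e2 hk hm hRg).
  have U : forall N : int, 1 <= N -> ex w N (g p0 - p0) -> ex w N (g pi - pi).
    by move=> N hN eN; apply: (unif hw hwv hdim ep e1 hgK hN eg eN).
  have hgp : g p0 - p0 = pp_of (g D) (g A) (g i0) - pp_of D A i0 by rewrite /p0 gpp.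
  move/eqP: hgd2; rewrite eqf_sqr => /orP[/eqP hgd|/eqP hgd].
  - have gD' : g D = D by rewrite gD hgd hD.
    have /eqP : (g alpha) ^+ 2 = alpha ^+ 2 by rewrite hga2 hgd halpha'.
    rewrite eqf_sqr => /orP[/eqP hga|/eqP hga];
    have /eqP : (g beta) ^+ 2 = beta ^+ 2 by rewrite hgb2 hgd hbeta'.
    + rewrite eqf_sqr => /orP[/eqP hgb|/eqP hgb].
      * by apply: Or41; apply: ident.
      * apply: Or42; split; last by rewrite hga hgb !inE eqxx !orbT.
        apply: U => //; rewrite hgp gD' gA gi gD' hga hgb hgd -hA.
        have -> : alpha * - beta / delta = - i0 by rewrite hi0 mulrN mulNr.
        have h := grp2 hw e2 hk hm hR. exact h.
    + rewrite eqf_sqr => /orP[/eqP hgb|/eqP hgb].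
      * apply: Or42; split; last by rewrite hga hgb !inE eqxx.
        apply: U => //; rewrite hgp gD' gA gi gD' hga hgb hgd.
        have -> : - alpha * D ^+ k / PP L k = - A by rewrite hA !mulNr.
        have -> : - alpha * beta / delta = - i0 by rewrite hi0 !mulNr.
        have h := grp1 hw e2 hk hm hR; exact h.
      * apply: Or44; split; last by rewrite hga hgb.
        apply: U => //; rewrite hgp gD' gA gi gD' hga hgb hgd.
        have -> : - alpha * D ^+ k / PP L k = - A by rewrite hA !mulNr.
        have -> : - alpha * - beta / delta = i0 by rewrite hi0 mulrNN.
        have h := grp3 hw e2 hk hm hR; exact h.
  - have gD' : g D = - D by rewrite gD hgd hD mulNr.
    rewrite gD' in hRg.
    have /eqP : (g alpha) ^+ 2 = beta ^+ 2 by rewrite hga2 hgd hbeta'.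
    rewrite eqf_sqr => /orP[/eqP hga|/eqP hga];
    have /eqP : (g beta) ^+ 2 = alpha ^+ 2 by rewrite hgb2 hgd halpha' opprK.
    + rewrite eqf_sqr => /orP[/eqP hgb|/eqP hgb].
      * apply: Or42; split; last by rewrite hga hgb !inE eqxx !orbT.
        have hgi : g i0 = - i0 by rewrite gi hga hgb hgd hi0; field; rewrite ?oppr_eq0 hd0.
        rewrite hgi in hRg.
        apply: U => //; rewrite hgp gD' hgi.
        have h := grp4 hw e2 hk hm hR hRg erefl; exact h.
      * apply: Or43; split; last by rewrite hga hgb !inE eqxx !orbT.
        have hgi : g i0 = i0 by rewrite gi hga hgb hgd hi0; field; rewrite ?oppr_eq0 hd0.
        rewrite hgi in hRg.
        apply: U => //; rewrite hgp gD' hgi.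
        have h := grp5 hw e2 hk hm hR hRg erefl; exact h.
    + rewrite eqf_sqr => /orP[/eqP hgb|/eqP hgb].
      * apply: Or43; split; last by rewrite hga hgb !inE eqxx.
        have hgi : g i0 = i0 by rewrite gi hga hgb hgd hi0; field; rewrite ?oppr_eq0 hd0.
        rewrite hgi in hRg.
        apply: U => //; rewrite hgp gD' hgi.
        have h := grp5 hw e2 hk hm hR hRg erefl; exact h.
      * apply: Or42; split; last by rewrite hga hgb !inE eqxx !orbT.
        have hgi : g i0 = - i0 by rewrite gi hga hgb hgd hi0; field; rewrite ?oppr_eq0 hd0.
        rewrite hgi in hRg.
        apply: U => //; rewrite hgp gD' hgi.
        have h := grp4 hw e2 hk hm hR hRg erefl; exact h.
have Gal1 : (1%g : gal_of {:L}) \in ('Gal({:L} / 1%VS))%g by apply: group1.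
have memG : forall n g, (g \in G n) =
   (g \in ('Gal({:L} / 1%VS))%g) && ((g pi == pi) || ((n.+1)%:Z <= w (g pi - pi))).
  by move=> n g; rewrite /G /ram_group inE.
have memS : forall s g, (g \in S s) =
   (g \in ('Gal({:L} / 1%VS))%g) && ((g alpha, g beta) \in s).
  by move=> s g; rewrite /S /gal_by_images inE.
have exv : forall N g, ex w N (g pi - pi) ->
    (g pi == pi) = false /\ w (g pi - pi) = N.
  move=> N g [h1 h2]; split => //; apply/negP => /eqP h; move: h1; by rewrite h subrr eqxx.
have key : forall n g, g \in ('Gal({:L} / 1%VS))%g ->
  (g \in G n) = [|| g == 1%g,
      ((n.+1 <= 2)%N && ((g alpha, g beta) \in [:: (- alpha, beta); (alpha, - beta); (beta, alpha); (- beta, - alpha)])),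
      ((n.+1 <= 4)%N && ((g alpha, g beta) \in [:: (- beta, alpha); (beta, - alpha)]))
    | ((n.+1 <= 8)%N && ((g alpha, g beta) == (- alpha, - beta)))].
  move=> n g hg; rewrite memG hg /=.
  case: (master g hg) => [->|[eN hp]|[eN hp]|[eN hp]].
  - by rewrite (gal_id _ pi) !eqxx.
  - have [-> ->] := exv _ _ eN.
    have -> : (g == 1%g) = false.
      apply/negP => /eqP h1; move: hp; rewrite h1 !gal_id !inE !xpair_eqE.
      by rewrite ?eqr_opp ?eqr_oppLR ?eqxx ?Faa ?Fab ?Fabn ?Fba ?Fban ?Fbb.
    move: hp; rewrite !inE => /or4P[]/eqP ->;
    rewrite !xpair_eqE ?eqr_opp ?eqr_oppLR ?eqxx ?Faa ?Fab ?Fabn ?Fba ?Fban ?Fbb /= ?andbT ?andbF ?orbF ?lez_nat //.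
  - have [-> ->] := exv _ _ eN.
    have -> : (g == 1%g) = false.
      apply/negP => /eqP h1; move: hp; rewrite h1 !gal_id !inE !xpair_eqE.
      by rewrite ?eqr_opp ?eqr_oppLR ?eqxx ?Faa ?Fab ?Fabn ?Fba ?Fban ?Fbb.
    move: hp; rewrite !inE => /orP[]/eqP ->;
    rewrite !xpair_eqE ?eqr_opp ?eqr_oppLR ?eqxx ?Faa ?Fab ?Fabn ?Fba ?Fban ?Fbb /= ?andbT ?andbF ?orbF ?lez_nat //.
  - have [-> ->] := exv _ _ eN.
    have -> : (g == 1%g) = false.
      apply/negP => /eqP h1; move: hp; rewrite h1 !gal_id => -[/eqP].
      by rewrite Faa.
    rewrite hp !inE !xpair_eqE ?eqr_opp ?eqr_oppLR ?eqxx ?Faa ?Fab ?Fabn ?Fba ?Fban ?Fbb /= ?andbT ?andbF ?orbF ?lez_nat //.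
have FF := (Faa, Fab, Fabn, Fba, Fban, Fbb).
have G1 : forall g : gal_of {:L}, ((g alpha, g beta) == (alpha, beta)) = false ->
   (g == 1%g) = false.
  move=> g hp; apply/negP => /eqP h1; move: hp; by rewrite h1 !gal_id eqxx.
have cases : forall g, g \in ('Gal({:L} / 1%VS))%g ->
  [\/ g = 1%g,
     [/\ (g == 1%g) = false, (g pi == pi) = false, w (g pi - pi) = 2 &
     (g alpha, g beta) \in [:: (- alpha, beta); (alpha, - beta); (beta, alpha); (- beta, - alpha)]],
     [/\ (g == 1%g) = false, (g pi == pi) = false, w (g pi - pi) = 4 &
     (g alpha, g beta) \in [:: (- beta, alpha); (beta, - alpha)]]
   | [/\ (g == 1%g) = false, (g pi == pi) = false, w (g pi - pi) = 8 &
     (g alpha, g beta) = (- alpha, - beta)]].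
  move=> g hg.
  case: (master g hg) => [->|[eN hp]|[eN hp]|[eN hp]]; first by apply: Or41.
  - apply: Or42; have [h1 h2] := exv _ _ eN; split => //.
    apply: G1; move: hp; rewrite !inE => /or4P[]/eqP ->; norm FF.
  - apply: Or43; have [h1 h2] := exv _ _ eN; split => //.
    apply: G1; move: hp; rewrite !inE => /orP[]/eqP ->; norm FF.
  - apply: Or44; have [h1 h2] := exv _ _ eN; split => //.
    apply: G1; rewrite hp; norm FF.
split.
- split; apply/setP => g; rewrite memG; case hg : (g \in _) => //=;
  (case: (cases g hg) => [->|[_ -> -> _]|[_ -> -> _]|[_ -> -> _]] //);
  by rewrite (gal_id _ pi) eqxx.
- split.
  + apply/setP => g; rewrite memG memS; case hg : (g \in _) => //=.
    case: (cases g hg) => [->|[_ -> -> hp]|[_ -> -> hp]|[_ -> -> hp]].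
    * by rewrite (gal_id _ pi) !gal_id eqxx; norm FF.
    * move: hp; rewrite !inE => /or4P[]/eqP ->; norm FF.
    * move: hp; rewrite !inE => /orP[]/eqP ->; norm FF.
    * rewrite hp; norm FF.
  + apply/setP => g; rewrite !memG; case hg : (g \in _) => //=.
    by case: (cases g hg) => [->|[_ -> -> hp]|[_ -> -> hp]|[_ -> -> hp]]; rewrite ?(gal_id _ pi) ?eqxx.
- move=> n hn; apply/setP => g; rewrite memG memS; case hg : (g \in _) => //=.
  have hz2 : ((n.+1)%:Z <= 2) = false by clear -hn; lia.
  have hz4 : ((n.+1)%:Z <= 4) = false by clear -hn; lia.
  have hz8 : ((n.+1)%:Z <= 8) = true by clear -hn; lia.
  case: (cases g hg) => [->|[_ -> -> hp]|[_ -> -> hp]|[_ -> -> hp]].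
  * by rewrite (gal_id _ pi) !gal_id eqxx; norm FF.
  * rewrite hz2; move: hp; rewrite !inE => /or4P[]/eqP ->; norm FF.
  * rewrite hz4; move: hp; rewrite !inE => /orP[]/eqP ->; norm FF.
  * rewrite hz8 hp; norm FF.
- move=> n hn; apply/setP => g; rewrite memG inE; case hg : (g \in _) => /=.
  + have hz2 : ((n.+1)%:Z <= 2) = false by clear -hn; lia.
    have hz4 : ((n.+1)%:Z <= 4) = false by clear -hn; lia.
    have hz8 : ((n.+1)%:Z <= 8) = false by clear -hn; lia.
    case: (cases g hg) => [->|[-> -> -> hp]|[-> -> -> hp]|[-> -> -> hp]].
    * by rewrite (gal_id _ pi) !eqxx.
    * by rewrite hz2.
    * by rewrite hz4.
    * by rewrite hz8.
  + by apply/esym/negP => /eqP h1; move: hg; rewrite h1 group1.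
Qed.
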